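(* Let $V$ be a smooth field on $\mathbb{R}^2$ with values in symmetric $2\times2$ real matrices such that $I+V$ is positive definite, and let $F=(I+V)R$ with $R$ orthogonal (polar decomposition) satisfy $\det F=1$. Assume moreover that there is a smooth scalar function $\theta$ on $\mathbb{R}^2$ with $\nabla\cdot V = A(I+V)\nabla\theta$. Then \[ \mathrm{tr}\,V = -\det V \] and \[ \nabla\cdot\nabla\cdot V = -\nabla\cdot\big[AV(I+V)^{-1}A\,\nabla\cdot V\big], \] where $A=\begin{pmatrix}0&-1\\1&0\end{pmatrix}$.
   Context: For a matrix field $M$, $(\nabla\cdot M)_i=\sum_j\partial_j M_{ij}$, and $\nabla\cdot\nabla\cdot V=\sum_{i,j}\partial_i\partial_j V_{ij}$; for a vector field $w$, $\nabla\cdot w=\sum_i\partial_i w_i$. In the paper's setting, the relation $\nabla\cdot V=A(I+V)\nabla\theta$ (with $\theta$ the rotation angle of $R$) follows from $\nabla\cdot F^T=0$ and is preserved by the viscoelastic flow. *)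

(* Defs.v *)
From HB Require Import structures.
From mathcomp Require Import all_boot all_order all_algebra.
From mathcomp Require Import all_classical all_reals all_analysis.
Set Implicit Arguments. Unset Strict Implicit. Unset Printing Implicit Defensive.
Import Order.TTheory GRing.Theory Num.Theory.
Import numFieldNormedType.Exports.
Local Open Scope ring_scope.

Section Defs.
Variable R : realType.

Definition pd (i : 'I_2) (f : R -> R -> R) : R -> R -> R :=
  fun x y => if i == ord0 then derive1 (fun t => f t y) x else derive1 (fun t => f x t) y.

Definition pds (l : seq 'I_2) (f : R -> R -> R) : R -> R -> R := foldr pd f l.

Definition smooth (f : R -> R -> R) : Prop :=
  forall l : seq 'I_2,
    (forall x y, derivable (fun t => pds l f t y) x 1 /\
                 derivable (fun t => pds l f x t) y 1) /\
    continuous (fun p : R * R => pds l f p.1 p.2).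

Definition smooth_mx (V : R -> R -> 'M[R]_2) : Prop :=
  forall i j, smooth (fun x y => V x y i j).

Definition divM (V : R -> R -> 'M[R]_2) : R -> R -> 'cV[R]_2 :=
  fun x y => \col_i \sum_j pd j (fun a b => V a b i j) x y.

Definition divv (w : R -> R -> 'cV[R]_2) : R -> R -> R :=
  fun x y => \sum_i pd i (fun a b => w a b i ord0) x y.

Definition divdiv (V : R -> R -> 'M[R]_2) : R -> R -> R :=
  fun x y => \sum_i \sum_j pd i (pd j (fun a b => V a b i j)) x y.

Definition grad (th : R -> R -> R) : R -> R -> 'cV[R]_2 :=
  fun x y => \col_i pd i th x y.

(* A = [[0, -1], [1, 0]] : A i j = i - j *)
Definition Amat : 'M[R]_2 := \matrix_(i < 2, j < 2) ((i : nat)%:R - (j : nat)%:R).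

Definition posdef (M : 'M[R]_2) : Prop :=
  forall v : 'cV[R]_2, v != 0 -> 0 < (v^T *m M *m v) ord0 ord0.

End Defs.

(* Main.v *)
Require Import Defs.
From HB Require Import structures.
From mathcomp Require Import all_boot all_order all_algebra.
From mathcomp Require Import all_classical all_reals all_analysis.
From mathcomp Require Import ring lra.
Import Order.TTheory GRing.Theory Num.Theory.
Import numFieldNormedType.Exports.
Local Open Scope ring_scope.

Lemma mvt1 (R : realType) (u : R -> R) a b : a < b -> (forall t, derivable u t 1) ->
  exists2 c, c \in `]a, b[%R & u b - u a = derive1 u c * (b - a).
Proof.
move=> ab du; apply: MVT => //.
  by move=> t _; rewrite derive1E; apply: derivableP.
by apply: derivable_within_continuous => t _; exact: du.
Qed.

Lemma stepA (R : realType) (f : R -> R -> R) :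
 (forall a b, derivable (fun t => f t b) a 1) ->
 (forall a b, derivable (fun t => derive1 (fun s => f s t) a) b 1) ->
 forall x y h k, 0 < h -> 0 < k ->
 exists xi eta, (x < xi < x + h /\ y < eta < y + k) /\
  f (x+h) (y+k) - f (x+h) y - f x (y+k) + f x y =
   h * k * derive1 (fun t => derive1 (fun s => f s t) xi) eta.
Proof.
move=> d1 d2 x y h k h0 k0.
have [xi xiI Hxi] := @mvt1 R (fun s => f s (y+k) - f s y) x (x+h)
  ltac:(by rewrite ltrDl) ltac:(by move=> t; apply: derivableB).
have [eta etaI Heta] := @mvt1 R (fun t => derive1 (fun s => f s t) xi) y (y+k)
  ltac:(by rewrite ltrDl) ltac:(by move=> t; apply: d2).
exists xi, eta; split.
  by move: xiI etaI; rewrite !in_itv /= => -> ->.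
have -> : f (x+h) (y+k) - f (x+h) y - f x (y+k) + f x y =
  (f (x+h) (y+k) - f (x+h) y) - (f x (y+k) - f x y) by ring.
rewrite Hxi.
have -> : derive1 (fun s => f s (y + k) - f s y) xi =
   derive1 (fun s => f s (y + k)) xi - derive1 (fun s => f s y) xi.
  rewrite !derive1E. 
  rewrite (deriveB (d1 _ _) (d1 _ _)) //.
rewrite Heta; ring.
Qed.
Lemma near_ball (R : realType) (P : R * R -> Prop) x y :
  (\forall t \near (x, y), P t) ->
  exists2 d, 0 < d & forall a b, `|x - a| < d -> `|y - b| < d -> P (a, b).
Proof.
move=> /nbhs_ballP [d d0 Hd]; exists d => // a b ha hb; apply: Hd.
by split; rewrite /= ?ball_normE /ball_ /=.
Qed.

Lemma pd0E (R : realType) (f : R -> R -> R) x y :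
  pd ord0 f x y = derive1 (fun t => f t y) x.
Proof. by rewrite /pd eqxx. Qed.
Lemma pd1E (R : realType) (f : R -> R -> R) x y :
  pd ord_max f x y = derive1 (fun t => f x t) y.
Proof. by []. Qed.

Lemma distB (R : realType) (D u v : R) : 0 < D -> u < v -> v < u + D / 2 -> `|u - v| < D.
Proof. move=> D0 a b; rewrite distrC ger0_norm ?subr_ge0 ?ltW //; lra. Qed.

Lemma contra_half (R : realType) (s b c : R) : s <= b + c -> b < s / 2 -> c < s / 2 -> False.
Proof. lra. Qed.

Lemma dec4 (R : realType) (a b c d : R) : c = d -> a - b = (a - c) - (b - d).
Proof. move=> ->; ring. Qed.

Lemma swap4 (R : realType) (a b c e : R) : a - b - c + e = a - c - b + e.
Proof. by rewrite [a - b - c]addrAC. Qed.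

Lemma schwarz (R : realType) (f : R -> R -> R) : smooth f ->
  forall x y, pd ord0 (pd ord_max f) x y = pd ord_max (pd ord0 f) x y.
Proof.
move=> sf x y.
have d00 := (sf [::]).1.
have d1x := (sf [:: ord0]).1.
have d2x := (sf [:: ord_max]).1.
have [_ cp] := sf [:: ord0; ord_max].
have [_ cq] := sf [:: ord_max; ord0].
rewrite /= in d00 d1x d2x cp cq.
set p := fun a b => pd ord0 (pd ord_max f) a b.
set q := fun a b => pd ord_max (pd ord0 f) a b.
have hA := @stepA R f (fun a b => (d00 a b).1)
  (fun a b => (d1x a b).2).
have hB := @stepA R (fun a b => f b a) (fun a b => (d00 b a).2)
  (fun a b => (d2x b a).1).
apply/eqP; apply: contraT => ne.
set e := `|p x y - q x y| / 2.
have e0 : 0 < e by rewrite divr_gt0 // normr_gt0 subr_eq0.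
have [d1 d10' Hp] : exists2 d, 0 < d & forall a b, `|x - a| < d -> `|y - b| < d ->
    `|p x y - p a b| < e.
  apply: (@near_ball R (fun t => `|p x y - p t.1 t.2| < e)).
  by move: (cp (x, y)) => /cvgrPdist_lt /(_ e e0).
have [d2 d20' Hq] : exists2 d, 0 < d & forall a b, `|x - a| < d -> `|y - b| < d ->
    `|q x y - q a b| < e.
  apply: (@near_ball R (fun t => `|q x y - q t.1 t.2| < e)).
  by move: (cq (x, y)) => /cvgrPdist_lt /(_ e e0).
set d := Num.min d1 d2.
have d0 : 0 < d by rewrite lt_min d10' d20'.
have h0 : 0 < d / 2 by rewrite divr_gt0.
have [xi [eta [[/andP[xi1 xi2] /andP[eta1 eta2]] E1]]] := hA x y _ _ h0 h0.
have [eta' [xi' [[/andP[eta1' eta2'] /andP[xi1' xi2']] E2]]] := hB y x _ _ h0 h0.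
have Epq : p xi' eta' = q xi eta.
  have hh : d / 2 * (d / 2) != 0 by rewrite mulf_neq0 // lt0r_neq0.
  apply: (mulfI hh) => /=.
  transitivity (f (x + d / 2) (y + d / 2) - f x (y + d / 2) - f (x + d / 2) y + f x y).
    exact: (esym E2).
  rewrite swap4; exact: E1.
have dd1 : d <= d1 by rewrite ge_min lexx.
have dd2 : d <= d2 by rewrite ge_min lexx orbT.
have B : forall u v, u < v -> v < u + d / 2 -> `|u - v| < d.
  by move=> u v; apply: distB.
have Hp' := Hp xi' eta' (lt_le_trans (B _ _ xi1' xi2') dd1) (lt_le_trans (B _ _ eta1' eta2') dd1).
have Hq' := Hq xi eta (lt_le_trans (B _ _ xi1 xi2) dd2) (lt_le_trans (B _ _ eta1 eta2) dd2).
have Hd : p x y - q x y = (p x y - p xi' eta') - (q x y - q xi eta)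
  := @dec4 R (p x y) (q x y) _ _ Epq.
suff : False by case.
apply: (@contra_half R `|p x y - q x y| `|p x y - p xi' eta'| `|q x y - q xi eta|).
- by rewrite {1}Hd ler_normB.
- exact: Hp'.
- exact: Hq'.
Qed.
Lemma sum2 (R : realType) (G : 'I_2 -> R) : \sum_(i < 2) G i = G ord0 + G ord_max.
Proof.
rewrite !big_ord_recl big_ord0 addr0; congr (_ + G _); exact/val_inj.
Qed.

Lemma det2 (R : realType) (M : 'M[R]_2) :
  \det M = M ord0 ord0 * M ord_max ord_max - M ord0 ord_max * M ord_max ord0.
Proof.
rewrite (expand_det_row _ ord0) sum2 /cofactor !det_mx11 !mxE /=.
have -> : lift ord0 ord0 = ord_max :> 'I_2 by exact/val_inj.
have -> : lift (@ord_max 1) ord0 = ord0 :> 'I_2 by exact/val_inj.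
rewrite /= expr0 expr1; ring.
Qed.

Lemma tr2 (R : realType) (M : 'M[R]_2) : \tr M = M ord0 ord0 + M ord_max ord_max.
Proof. by rewrite /mxtrace sum2. Qed.

Definition cv2 {R : realType} (p q : R) : 'cV[R]_2 := \col_i (if i == ord0 then p else q).

Lemma qform (R : realType) (M : 'M[R]_2) p q :
  ((cv2 p q)^T *m M *m cv2 p q) ord0 ord0 =
  M ord0 ord0 * p * p + (M ord0 ord_max + M ord_max ord0) * p * q + M ord_max ord_max * q * q.
Proof. rewrite !mxE sum2 !mxE !sum2 !mxE /=; ring. Qed.

Lemma cv2_neq0 (R : realType) (p q : R) : q != 0 -> cv2 p q != 0.
Proof.
move=> nq; apply/eqP => /matrixP /(_ ord_max ord0); rewrite !mxE /= => h.
by move: nq; rewrite h eqxx.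
Qed.

Lemma cv2_neq0' (R : realType) (p q : R) : p != 0 -> cv2 p q != 0.
Proof.
move=> nq; apply/eqP => /matrixP /(_ ord0 ord0); rewrite !mxE /= => h.
by move: nq; rewrite h eqxx.
Qed.

Lemma posdef_det (R : realType) (M : 'M[R]_2) : M^T = M -> posdef M -> 0 < \det M.
Proof.
move=> sym pd.
have s : M ord0 ord_max = M ord_max ord0 by rewrite -[in LHS]sym mxE.
have a0 : 0 < M ord0 ord0.
  have := pd _ (@cv2_neq0' R 1 0 (oner_neq0 _)); rewrite qform; lra.
have := pd _ (@cv2_neq0 R (- M ord0 ord_max) (M ord0 ord0) (lt0r_neq0 a0)).
rewrite qform det2 -s => h.
have : 0 < M ord0 ord0 * (M ord0 ord0 * M ord_max ord_max - M ord0 ord_max * M ord0 ord_max).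
  move: h; congr (0 < _); ring.
by rewrite pmulr_rgt0.
Qed.
Definition dboth {R : realType} (f : R -> R -> R) x y :=
  derivable (fun t => f t y) x 1 /\ derivable (fun t => f x t) y 1.

Lemma pdD (R : realType) i (f g : R -> R -> R) x y : dboth f x y -> dboth g x y ->
  pd i (fun a b => f a b + g a b) x y = pd i f x y + pd i g x y.
Proof.
move=> [f1 f2] [g1 g2]; rewrite /pd; case: ifP => _; rewrite !derive1E.
  exact: (deriveD f1 g1).
exact: (deriveD f2 g2).
Qed.

Lemma pdN (R : realType) i (f : R -> R -> R) x y : dboth f x y ->
  pd i (fun a b => - f a b) x y = - pd i f x y.
Proof.
move=> [f1 f2]; rewrite /pd; case: ifP => _; rewrite !derive1E.
  exact: (deriveN f1).
exact: (deriveN f2).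
Qed.

Lemma dbothD (R : realType) (f g : R -> R -> R) x y : dboth f x y -> dboth g x y ->
  dboth (fun a b => f a b + g a b) x y.
Proof. by move=> [f1 f2] [g1 g2]; split; [exact: (derivableD f1 g1) | exact: (derivableD f2 g2)]. Qed.

Lemma dbothN (R : realType) (f : R -> R -> R) x y : dboth f x y ->
  dboth (fun a b => - f a b) x y.
Proof. by move=> [f1 f2]; split; apply: derivableN. Qed.

Lemma pd_ext (R : realType) i (f g : R -> R -> R) : (forall a b, f a b = g a b) -> pd i f = pd i g.
Proof. by move=> e; congr pd; apply/funext => a; apply/funext => b. Qed.

Arguments dbothN {R f x y}.
Arguments dbothD {R f g x y}.

Lemma lin6 (R : realType) (a b c d s : R) :
  a + b + (c + d) = - ((- s + - (a + b)) + (s + - (c + d))).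
Proof. ring. Qed.

Lemma AA (R : realType) : Amat R *m Amat R = - 1%:M.
Proof.
apply/matrixP => i j; rewrite !mxE sum2 !mxE.
case: i => [[|[|i]] Hi] //; case: j => [[|[|j]] Hj] //=; ring.
Qed.

Theorem lemma2p1 (R : realType) (V : R -> R -> 'M[R]_2) (Q : R -> R -> 'M[R]_2)
    (F : R -> R -> 'M[R]_2) (th : R -> R -> R) :
  smooth_mx V ->
  (forall x y, (V x y)^T = V x y) ->
  (forall x y, posdef (1%:M + V x y)) ->
  (forall x y, Q x y *m (Q x y)^T = 1%:M) ->
  (forall x y, F x y = (1%:M + V x y) *m Q x y) ->
  (forall x y, \det (F x y) = 1) ->
  smooth th ->
  (forall x y, divM V x y = Amat R *m (1%:M + V x y) *m grad th x y) ->
  forall x y,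
    \tr (V x y) = - \det (V x y) /\
    divdiv V x y =
      - divv (fun a b => Amat R *m V a b *m invmx (1%:M + V a b) *m Amat R *m divM V a b) x y.
Proof.
move=> sV symV pdV QQ FE detF sth divE.
have detW : forall a b, \det (1%:M + V a b) = 1.
  move=> a b.
  have dQ : \det (Q a b) * \det (Q a b) = 1.
    by rewrite -{2}det_tr -det_mulmx QQ det1.
  have dF : \det (1%:M + V a b) * \det (Q a b) = 1 by rewrite -det_mulmx -FE.
  have pos : 0 < \det (1%:M + V a b).
    apply: posdef_det (pdV a b).
    by rewrite linearD /= tr_scalar_mx symV.
  set d := \det (1%:M + V a b) in dF pos *.
  have d2 : (d - 1) * (d + 1) = 0.
    have -> : (d - 1) * (d + 1) = (d * \det (Q a b)) * (d * \det (Q a b)) - 1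
      by rewrite mulrACA dQ; ring.
    by rewrite dF mulr1 subrr.
  move/eqP: d2; rewrite mulf_eq0 => /orP[]; rewrite ?subr_eq0 => /eqP // h.
  lra.
move=> x y; split.
  have := detW x y; rewrite det2 tr2 det2 !mxE /=; lra.
have key : (fun a b => Amat R *m V a b *m invmx (1%:M + V a b) *m Amat R *m divM V a b)
    = (fun a b => Amat R *m grad th a b - divM V a b).
  apply/funext => a; apply/funext => b.
  have uW : 1%:M + V a b \in unitmx by rewrite unitmxE detW unitr1.
  rewrite divE -!mulmxA [Amat R *m (Amat R *m _)]mulmxA AA mulNmx mul1mx.
  rewrite !mulmxN [invmx _ *m (_ *m _)]mulmxA mulVmx // mul1mx.
  by rewrite mulmxDl mul1mx mulmxDr opprD addrA subrr add0r.
Opaque pd.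
pose S (i j : 'I_2) := pd j (fun a b => V a b i j).
have dth : forall k, dboth (pd k th) x y := fun k => (sth [:: k]).1 x y.
have dS : forall i j, dboth (S i j) x y := fun i j => (sV i j [:: j]).1 x y.
have c0 : forall a b, (Amat R *m grad th a b - divM V a b) ord0 ord0 =
    - pd ord_max th a b + - (S ord0 ord0 a b + S ord0 ord_max a b).
  move=> a b; rewrite /S !mxE !sum2 !mxE /=; ring.
have c1 : forall a b, (Amat R *m grad th a b - divM V a b) ord_max ord0 =
    pd ord0 th a b + - (S ord_max ord0 a b + S ord_max ord_max a b).
  move=> a b; rewrite /S !mxE !sum2 !mxE /=; ring.
have e0 : pd ord0 (fun a b => (Amat R *m grad th a b - divM V a b) ord0 ord0) x y =
    - pd ord0 (pd ord_max th) x y + - (pd ord0 (S ord0 ord0) x y + pd ord0 (S ord0 ord_max) x y).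
  rewrite (@pd_ext R ord0 _ _ c0).
  rewrite (@pdD R ord0 (fun a b => - pd ord_max th a b) (fun a b => - (S ord0 ord0 a b + S ord0 ord_max a b)) x y (dbothN (dth _)) (dbothN (dbothD (dS _ _) (dS _ _)))).
  rewrite (@pdN R ord0 (pd ord_max th) x y (dth _)).
  rewrite (@pdN R ord0 (fun a b => S ord0 ord0 a b + S ord0 ord_max a b) x y (dbothD (dS _ _) (dS _ _))).
  congr (_ + - _); exact: (@pdD R ord0 (S ord0 ord0) (S ord0 ord_max) x y (dS _ _) (dS _ _)).
have e1 : pd ord_max (fun a b => (Amat R *m grad th a b - divM V a b) ord_max ord0) x y =
    pd ord_max (pd ord0 th) x y + - (pd ord_max (S ord_max ord0) x y + pd ord_max (S ord_max ord_max) x y).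
  rewrite (@pd_ext R ord_max _ _ c1).
  rewrite (@pdD R ord_max (pd ord0 th) (fun a b => - (S ord_max ord0 a b + S ord_max ord_max a b)) x y (dth _) (dbothN (dbothD (dS _ _) (dS _ _)))).
  rewrite (@pdN R ord_max (fun a b => S ord_max ord0 a b + S ord_max ord_max a b) x y (dbothD (dS _ _) (dS _ _))).
  congr (_ + - _); exact: (@pdD R ord_max (S ord_max ord0) (S ord_max ord_max) x y (dS _ _) (dS _ _)).
have -> : divv (fun a b => Amat R *m V a b *m invmx (1%:M + V a b) *m Amat R *m divM V a b) x y =
   pd ord0 (fun a b => (Amat R *m grad th a b - divM V a b) ord0 ord0) x y +
   pd ord_max (fun a b => (Amat R *m grad th a b - divM V a b) ord_max ord0) x y.
  by rewrite key /divv sum2.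
have -> : divdiv V x y = pd ord0 (S ord0 ord0) x y + pd ord0 (S ord0 ord_max) x y +
    (pd ord_max (S ord_max ord0) x y + pd ord_max (S ord_max ord_max) x y).
  rewrite /divdiv sum2 /=.
  rewrite sum2 /=.
  rewrite sum2 /=.
  by rewrite /S.
rewrite e0 e1 (@schwarz R th sth x y).
exact: lin6.
Qed.
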